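(* Every $LS$-sequence of points $(\xi_{L,S}^n)_{n\in\mathbb{N}}$ does not have Poissonian pair correlations.
   Context: $\|x\|$ denotes the distance from $x$ to the nearest integer. A sequence $(x_n)_{n\in\mathbb{N}}$ in $[0,1)$ has Poissonian pair correlations if for every $s \geq 0$, $F_N(s) := \frac{1}{N}\#\{1 \leq l \neq m \leq N : \|x_l - x_m\| \leq s/N\} \to 2s$ as $N\to\infty$. $LS$-sequences: Let $L\in\mathbb{N}$, $S\in\mathbb{N}_0$ with $L+S\ge 2$, and let $\beta\in(0,1)$ be the solution of $L\beta+S\beta^2=1$. Let $\rho_{L,S}$ be the partition of $[0,1)$ into $L+S$ consecutive intervals, the first $L$ of length $\beta$ and the following $S$ of length $\beta^2$. For a partition $\pi$ of $[0,1)$, its $\rho$-refinement $\rho\pi$ is obtained by subdividing every interval of maximal length of $\pi$ positively homothetically to $\rho$. The $LS$-sequence of partitions is $(\rho_{L,S}^n\pi)_{n\in\mathbb{N}}$ with $\pi=\{[0,1)\}$; the partition $\rho_{L,S}^n\pi$ consists of $t_n$ intervals, of which $l_n$ have the maximal length $\beta^n$ (the rest have length $\beta^{n+1}$). The $LS$-sequence of points is defined as follows: $\Lambda^1_{L,S}$ is the list of the $t_1$ left endpoints of $\rho_{L,S}\pi$ ordered by magnitude. Given $\Lambda^n_{L,S}=\{\xi^1_{L,S},\ldots,\xi^{t_n}_{L,S}\}$ (ordered), the ordered list $\Lambda^{n+1}_{L,S}$ is $\xi^1,\ldots,\xi^{t_n}$, followed by $\psi^{n+1}_{1,0}(\xi^1),\ldots,\psi^{n+1}_{1,0}(\xi^{l_n}),\ldots,\psi^{n+1}_{L,0}(\xi^1),\ldots,\psi^{n+1}_{L,0}(\xi^{l_n})$,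 followed by $\psi^{n+1}_{L,1}(\xi^1),\ldots,\psi^{n+1}_{L,1}(\xi^{l_n}),\ldots,\psi^{n+1}_{L,S-1}(\xi^1),\ldots,\psi^{n+1}_{L,S-1}(\xi^{l_n})$, where $\psi^n_{i,j}(x)=x+i\beta^n+j\beta^{n+1}$. The $LS$-sequence of points $(\xi^n_{L,S})_{n\in\mathbb{N}}$ is the sequence whose first $t_n$ terms are $\Lambda^n_{L,S}$ for every $n$. (For $S=0$, $L=b$ one obtains the van der Corput sequence in base $b$.) *)

(* Defs.v *)
From Stdlib Require Import Reals List Arith Lia Lra.
Import ListNotations.
Open Scope R_scope.

Definition dist_int (x : R) : R := Rmin (frac_part x) (1 - frac_part x).

(* F_N(s) = (1/N) #{ (l,m) in [1..N]^2 : l <> m, ||x_l - x_m|| <= s/N },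
   with the sequence indexed from 0 here (x 0 is the first term). *)
Definition pair_count (x : nat -> R) (N : nat) (s : R) : nat :=
  length (filter
    (fun p : nat * nat =>
       if Nat.eq_dec (fst p) (snd p) then false
       else if Rle_dec (dist_int (x (fst p) - x (snd p))) (s / INR N)
            then true else false)
    (list_prod (seq 0 N) (seq 0 N))).

Definition F_pc (x : nat -> R) (N : nat) (s : R) : R :=
  INR (pair_count x N s) / INR N.

Definition poissonian_pair_correlations (x : nat -> R) : Prop :=
  forall s : R, 0 <= s -> Un_cv (fun N => F_pc x N s) (2 * s).

(* (t_n, l_n): number of intervals of rho^n pi and number of those of
   maximal length; t_0 = l_0 = 1 (pi = {[0,1)}). *)
Fixpoint ls_tl (L S : nat) (n : nat) : nat * nat :=
  match n with
  | O => (1%nat, 1%nat)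
  | Datatypes.S n' =>
      let '(t, l) := ls_tl L S n' in
      (t + (L + S - 1) * l, (L - 1) * l + t)%nat
  end.

Definition ls_t L S n := fst (ls_tl L S n).
Definition ls_l L S n := snd (ls_tl L S n).

(* the k-th new translation (k = 1 .. L+S-1) at stage m:
   psi^m_{k,0} for k < L, and psi^m_{L,k-L} for L <= k. *)
Definition ls_shift (L : nat) (beta : R) (m k : nat) : R :=
  if Nat.ltb k L then INR k * beta ^ m
  else INR L * beta ^ m + INR (k - L) * beta ^ (m + 1).

(* Lambda^n as an ordered list; Lambda^0 = [0], and Lambda^1 is then the
   list of left endpoints of rho_{L,S} pi ordered by magnitude. *)
Fixpoint ls_Lambda (L S : nat) (beta : R) (n : nat) : list R :=
  match n with
  | O => [0]
  | Datatypes.S n' =>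
      let prev := ls_Lambda L S beta n' in
      let firsts := firstn (ls_l L S n') prev in
      prev ++ flat_map (fun k => map (fun x => x + ls_shift L beta n k) firsts)
                       (seq 1 (L + S - 1))
  end.

(* The LS-sequence of points: the k-th term (0-indexed) is the k-th entry
   of Lambda^k (which has t_k >= k+1 entries; the Lambda^n are nested). *)
Definition ls_seq (L S : nat) (beta : R) (k : nat) : R :=
  nth k (ls_Lambda L S beta k) 0.

(* Main.v *)
Require Import Defs.
From Stdlib Require Import Reals List Arith Lia Lra Permutation.
Import ListNotations.
Open Scope R_scope.

Lemma in_firstn_in {A} (n : nat) (l : list A) x : In x (firstn n l) -> In x l.
Proof. intro H. rewrite <- (firstn_skipn n l). apply in_or_app; auto. Qed.

Lemma in_skipn_in {A} (n : nat) (l : list A) x : In x (skipn n l) -> In x l.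
Proof. intro H. rewrite <- (firstn_skipn n l). apply in_or_app; auto. Qed.

Lemma FOP_perm {A} (R0 : A -> A -> Prop) :
  (forall x y, R0 x y -> R0 y x) ->
  forall l l', Permutation l l' -> ForallOrdPairs R0 l -> ForallOrdPairs R0 l'.
Proof.
  intros Hs l l' P. induction P; intro H.
  - exact H.
  - inversion H; subst. constructor; [|auto].
    eapply Permutation_Forall; eauto.
  - inversion H; subst. inversion H2; subst. inversion H3; subst.
    constructor.
    + constructor; [apply Hs; assumption | assumption].
    + constructor; assumption.
  - auto.
Qed.

Lemma FOP_app {A} (R0 : A -> A -> Prop) l1 l2 :
  ForallOrdPairs R0 l1 -> ForallOrdPairs R0 l2 ->
  (forall x y, In x l1 -> In y l2 -> R0 x y) -> ForallOrdPairs R0 (l1 ++ l2).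
Proof.
  induction l1 as [|a l1 IH]; intros H1 H2 H; simpl; auto.
  inversion H1; subst. constructor.
  - apply Forall_app; split; auto.
    apply Forall_forall; intros y Hy; apply H; simpl; auto.
  - apply IH; auto. intros; apply H; simpl; auto.
Qed.

Lemma FOP_app_inv {A} (R0 : A -> A -> Prop) l1 l2 :
  ForallOrdPairs R0 (l1 ++ l2) ->
  ForallOrdPairs R0 l1 /\ ForallOrdPairs R0 l2 /\
  (forall x y, In x l1 -> In y l2 -> R0 x y).
Proof.
  induction l1 as [|a l1 IH]; intros H; simpl in *.
  - split; [constructor|split; auto]. intros _ _ [].
  - inversion H; subst. destruct (IH H3) as (Ha & Hb & Hc).
    apply Forall_app in H2. destruct H2 as [H2a H2b].
    split; [constructor; auto|split; auto].
    intros x y [<-|Hx] Hy; auto. rewrite Forall_forall in H2b; auto.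
Qed.

Lemma FOP_flat_map {A B} (R0 : B -> B -> Prop) (Ra : A -> A -> Prop) (f : A -> list B) l :
  ForallOrdPairs Ra l -> (forall a, In a l -> ForallOrdPairs R0 (f a)) ->
  (forall a b u v, In a l -> In b l -> Ra a b -> In u (f a) -> In v (f b) -> R0 u v) ->
  ForallOrdPairs R0 (flat_map f l).
Proof.
  induction l as [|a l IH]; intros H Hf Hc; simpl; [constructor|].
  inversion H; subst. apply FOP_app.
  - apply Hf; simpl; auto.
  - apply IH; auto.
    + intros; apply Hf; simpl; auto.
    + intros a0 b u v Q1 Q2 Q3 Q4 Q5. apply (Hc a0 b); simpl; auto.
  - intros u v Hu Hv. apply in_flat_map in Hv. destruct Hv as (b & Hb & Hv).
    eapply (Hc a b); simpl; eauto. rewrite Forall_forall in H2; auto.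
Qed.

Lemma FOP_map {A B} (R0 : B -> B -> Prop) (Ra : A -> A -> Prop) (f : A -> B) l :
  ForallOrdPairs Ra l ->
  (forall a b, In a l -> In b l -> Ra a b -> R0 (f a) (f b)) ->
  ForallOrdPairs R0 (map f l).
Proof.
  induction l as [|a l IH]; intros H Hc; simpl; [constructor|].
  inversion H; subst. constructor.
  - apply Forall_map. rewrite Forall_forall in *. intros; apply Hc; simpl; auto.
  - apply IH; auto; intros; apply Hc; simpl; auto.
Qed.

Lemma FOP_map_seq {B} (R0 : B -> B -> Prop) (f : nat -> B) n : forall s,
  (forall i j, (s <= i)%nat -> (i < j)%nat -> (j < s + n)%nat -> R0 (f i) (f j)) ->
  ForallOrdPairs R0 (map f (seq s n)).
Proof.
  induction n as [|n IH]; intros s H; simpl; [constructor|].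
  constructor.
  - apply Forall_map, Forall_forall. intros j Hj. apply in_seq in Hj. apply H; lia.
  - apply IH. intros; apply H; lia.
Qed.

Lemma FOP_nth {A} (R0 : A -> A -> Prop) (d : A) l :
  ForallOrdPairs R0 l -> forall i j, (i < j)%nat -> (j < length l)%nat ->
  R0 (nth i l d) (nth j l d).
Proof.
  induction 1 as [|a l Hf Hl IH]; intros i j Hij Hj; simpl in *; [lia|].
  destruct i as [|i]; destruct j as [|j]; try lia.
  - rewrite Forall_forall in Hf. apply Hf, nth_In. lia.
  - apply IH; lia.
Qed.

Lemma perm_zipin {A B} (h : A -> B) (F : A -> list B) l :
  Permutation (map h l ++ flat_map F l) (flat_map (fun a => h a :: F a) l).
Proof.
  induction l as [|a l IH]; simpl; auto.
  constructor. eapply Permutation_trans; [apply Permutation_app_swap_app|].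
  apply Permutation_app_head; auto.
Qed.

Lemma perm_transpose {A B C} (g : C -> A -> B) ks l :
  Permutation (flat_map (fun k => map (g k) l) ks)
              (flat_map (fun a => map (fun k => g k a) ks) l).
Proof.
  induction ks as [|k ks IH]; simpl.
  - induction l; simpl; auto.
  - eapply Permutation_trans; [apply Permutation_app_head; exact IH|].
    apply perm_zipin.
Qed.

Lemma length_flat_map_const {A B} (f : A -> list B) c l :
  (forall a, In a l -> length (f a) = c) -> length (flat_map f l) = (length l * c)%nat.
Proof.
  induction l as [|a l IH]; intros H; simpl; auto.
  rewrite length_app, H, IH; simpl; auto. intros; apply H; simpl; auto.
Qed.

Lemma filter_nil {A} (f : A -> bool) l : (forall x, In x l -> f x = false) -> filter f l = [].
Proof.
  induction l as [|a l IH]; intros H; simpl; auto.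
  rewrite H; simpl; auto. apply IH; intros; apply H; simpl; auto.
Qed.

Lemma ls_t_S L Ss n : ls_t L Ss (Datatypes.S n) = (ls_t L Ss n + (L + Ss - 1) * ls_l L Ss n)%nat.
Proof. unfold ls_t, ls_l; simpl; destruct (ls_tl L Ss n); reflexivity. Qed.
Lemma ls_l_S L Ss n : ls_l L Ss (Datatypes.S n) = ((L - 1) * ls_l L Ss n + ls_t L Ss n)%nat.
Proof. unfold ls_t, ls_l; simpl; destruct (ls_tl L Ss n); reflexivity. Qed.

Lemma ls_nat L Ss n : (1 <= L)%nat -> (2 <= L + Ss)%nat ->
  (1 <= ls_l L Ss n)%nat /\ (ls_l L Ss n <= ls_t L Ss n)%nat /\ (n + 1 <= ls_t L Ss n)%nat.
Proof.
  intros H1 H2. induction n as [|n IH].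
  - unfold ls_l, ls_t; simpl; lia.
  - rewrite ls_t_S, ls_l_S. destruct IH as (A & B & C). nia.
Qed.

Lemma ls_real L Ss beta n : (1 <= L)%nat -> (2 <= L + Ss)%nat ->
  INR L * beta + INR Ss * beta ^ 2 = 1 ->
  INR (ls_l L Ss n) * beta ^ n + (INR (ls_t L Ss n) - INR (ls_l L Ss n)) * beta ^ (n + 1) = 1.
Proof.
  intros H1 H2 H. induction n as [|n IH].
  - unfold ls_l, ls_t; simpl; ring.
  - rewrite ls_t_S, ls_l_S. rewrite !plus_INR, !mult_INR, !minus_INR by lia.
    rewrite <- IH. simpl INR.
    replace (Datatypes.S n + 1)%nat with (n + 2)%nat by lia.
    replace (Datatypes.S n) with (n + 1)%nat by lia.
    rewrite !pow_add.
    set (l := INR (ls_l L Ss n)). set (t := INR (ls_t L Ss n)).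
    set (b := beta ^ n).
    assert (E : INR L * beta + INR Ss * beta ^ 2 - 1 = 0) by lra.
    rewrite plus_INR. transitivity (l * b + (t - l) * (b * beta ^ 1) + l * b * (INR L * beta + INR Ss * beta ^ 2 - 1)).
    + simpl pow. ring.
    + rewrite E. ring.
Qed.

Lemma ls_tb L Ss beta n : (1 <= L)%nat -> (2 <= L + Ss)%nat -> 0 < beta < 1 ->
  INR L * beta + INR Ss * beta ^ 2 = 1 ->
  1 <= INR (ls_t L Ss n) * beta ^ n.
Proof.
  intros H1 H2 Hb H. pose proof (ls_real L Ss beta n H1 H2 H) as E.
  destruct (ls_nat L Ss n H1 H2) as (A & B & C).
  apply le_INR in B.
  assert (Hp : 0 <= beta ^ n) by (apply pow_le; lra).
  assert (Hq : beta ^ (n + 1) <= beta ^ n) by (rewrite pow_add; simpl; nra).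
  nra.
Qed.

Definition lenk (L : nat) (beta : R) (m k : nat) : R :=
  if Nat.ltb k L then beta ^ m else beta ^ (m + 1).
Definition gpiece L beta m k (a : R * R) : R * R :=
  (fst a + ls_shift L beta m k, lenk L beta m k).

Fixpoint Iv (L Ss : nat) (beta : R) (n : nat) : list (R * R) :=
  match n with
  | O => [(0, 1)]
  | Datatypes.S n' =>
    let prev := Iv L Ss beta n' in
    map (gpiece L beta n 0) prev ++
    flat_map (fun k => map (gpiece L beta n k) (firstn (ls_l L Ss n') prev)) (seq 1 (L + Ss - 1))
  end.

Lemma shift0 L beta m : (1 <= L)%nat -> ls_shift L beta m 0 = 0.
Proof. intros H. unfold ls_shift. destruct (Nat.ltb_spec 0 L); [simpl; ring|lia]. Qed.

Lemma Iv_Lambda L Ss beta n : (1 <= L)%nat ->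
  map fst (Iv L Ss beta n) = ls_Lambda L Ss beta n.
Proof.
  intros HL. induction n as [|n IH]; simpl; auto.
  rewrite map_app, <- IH. f_equal.
  - rewrite map_map. apply map_ext. intros a. unfold gpiece; simpl. rewrite shift0; auto. ring.
  - induction (seq 1 (L + Ss - 1)) as [|k ks IHk]; simpl; auto.
    rewrite map_app, IHk. f_equal.
    rewrite firstn_map, !map_map. apply map_ext. intros; reflexivity.
Qed.

Lemma Lambda_prefix L Ss beta a b : (a <= b)%nat ->
  exists r, ls_Lambda L Ss beta b = ls_Lambda L Ss beta a ++ r.
Proof.
  induction 1 as [|b Hab IH].
  - exists []; rewrite app_nil_r; auto.
  - destruct IH as [r Hr]. simpl. rewrite Hr, <- app_assoc. eexists; reflexivity.
Qed.

Definition disj (a b : R * R) : Prop := fst a + snd a <= fst b \/ fst b + snd b <= fst a.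
Definition subi (u a : R * R) : Prop := fst a <= fst u /\ fst u + snd u <= fst a + snd a.

Lemma disj_sym a b : disj a b -> disj b a.
Proof. unfold disj; tauto. Qed.

Lemma disj_sub a b u v : disj a b -> subi u a -> subi v b -> disj u v.
Proof. unfold disj, subi; intros; lra. Qed.

Lemma INR_lt_le a b : (a < b)%nat -> INR a + 1 <= INR b.
Proof. intros H. rewrite <- S_INR. apply le_INR. lia. Qed.

Lemma piece_disj L beta n k k' : 0 < beta < 1 ->
  (k < k')%nat -> ls_shift L beta (Datatypes.S n) k + lenk L beta (Datatypes.S n) k
                  <= ls_shift L beta (Datatypes.S n) k'.
Proof.
  intros Hb Hk. unfold ls_shift, lenk.
  assert (P1 : 0 <= beta ^ (Datatypes.S n)) by (apply pow_le; lra).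
  assert (P2 : 0 <= beta ^ (Datatypes.S n + 1)) by (apply pow_le; lra).
  destruct (Nat.ltb_spec k L); destruct (Nat.ltb_spec k' L).
  - pose proof (INR_lt_le _ _ Hk). nra.
  - assert (k < L)%nat by lia. pose proof (INR_lt_le _ _ H1).
    pose proof (pos_INR (k' - L)). nra.
  - lia.
  - assert (k - L < k' - L)%nat by lia. pose proof (INR_lt_le _ _ H1). nra.
Qed.

Lemma piece_in L Ss beta n k : 0 < beta < 1 -> INR L * beta + INR Ss * beta ^ 2 = 1 ->
  (k < L + Ss)%nat ->
  0 <= ls_shift L beta (Datatypes.S n) k /\
  ls_shift L beta (Datatypes.S n) k + lenk L beta (Datatypes.S n) k <= beta ^ n.
Proof.
  intros Hb H Hk. unfold ls_shift, lenk.
  replace (Datatypes.S n + 1)%nat with (n + 2)%nat by lia.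
  replace (Datatypes.S n) with (n + 1)%nat by lia.
  rewrite !pow_add.
  assert (P1 : 0 <= beta ^ n) by (apply pow_le; lra).
  assert (E : beta ^ n = beta ^ n * (INR L * beta + INR Ss * beta ^ 2)) by (rewrite H; ring).
  simpl pow in *. rewrite Rmult_1_r in *.
  pose proof (pos_INR k). pose proof (pos_INR Ss). pose proof (pos_INR L).
  assert (Q : 0 <= beta ^ n * beta) by nra.
  assert (Q2 : 0 <= beta ^ n * (beta * beta)) by nra.
  destruct (Nat.ltb_spec k L).
  - pose proof (INR_lt_le _ _ H3). split; [nra|].
    assert (0 <= INR Ss * (beta ^ n * (beta * beta))) by nra.
    assert ((INR k + 1) * (beta ^ n * beta) <= INR L * (beta ^ n * beta)) by nra.
    nra.
  - assert (HkL : (k - L < Ss)%nat) by lia. pose proof (INR_lt_le _ _ HkL).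
    pose proof (pos_INR (k - L)). split; [nra|].
    assert ((INR (k - L) + 1) * (beta ^ n * (beta * beta)) <= INR Ss * (beta ^ n * (beta * beta))) by nra.
    nra.
Qed.

Lemma lenk_lb L beta m k : 0 < beta < 1 -> beta ^ (m + 1) <= lenk L beta m k.
Proof.
  intros Hb. unfold lenk. destruct (Nat.ltb k L); [|lra].
  rewrite pow_add. assert (0 <= beta ^ m) by (apply pow_le; lra). simpl. nra.
Qed.

Lemma lenk_lt L beta m k : (k < L)%nat -> lenk L beta m k = beta ^ m.
Proof. intros H. unfold lenk. destruct (Nat.ltb_spec k L); [auto|lia]. Qed.

Lemma perm_key {X} (g : nat -> X -> X) A B ks :
  Permutation (map (g 0%nat) (A ++ B) ++ flat_map (fun k => map (g k) A) ks)
              (flat_map (fun a => map (fun k => g k a) (0%nat :: ks)) A ++ map (g 0%nat) B).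
Proof.
  rewrite map_app, <- app_assoc.
  eapply Permutation_trans.
  { apply Permutation_app_head. apply Permutation_app_comm. }
  rewrite app_assoc. apply Permutation_app_tail.
  eapply Permutation_trans.
  { apply Permutation_app_head. apply perm_transpose. }
  apply perm_zipin.
Qed.

Lemma seq0_cons m : (1 <= m)%nat -> (0%nat :: seq 1 (m - 1)) = seq 0 m.
Proof. intros H. destruct m; [lia|]. simpl. rewrite Nat.sub_0_r. reflexivity. Qed.

Definition Inv L Ss beta n : Prop :=
  length (Iv L Ss beta n) = ls_t L Ss n /\
  ForallOrdPairs disj (Iv L Ss beta n) /\
  Forall (fun a => 0 <= fst a /\ fst a + snd a <= 1 /\ beta ^ (n + 1) <= snd a) (Iv L Ss beta n) /\
  Forall (fun a => beta ^ n <= snd a) (firstn (ls_l L Ss n) (Iv L Ss beta n)).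

Lemma Iv_inv L Ss beta n : (1 <= L)%nat -> (2 <= L + Ss)%nat -> 0 < beta < 1 ->
  INR L * beta + INR Ss * beta ^ 2 = 1 -> Inv L Ss beta n.
Proof.
  intros HL HLS Hb H. induction n as [|n IH].
  - unfold Inv. simpl. unfold ls_t, ls_l; simpl. split; [auto|split].
    + constructor; constructor.
    + split; constructor; simpl; auto; lra.
  - destruct IH as (Hlen & Hfop & Hc & Hd).
    destruct (ls_nat L Ss n HL HLS) as (Nl1 & Nlt & Nt).
    set (I := Iv L Ss beta n) in *.
    set (l := ls_l L Ss n) in *. set (t := ls_t L Ss n) in *.
    set (A := firstn l I). set (B := skipn l I).
    set (g := fun k => gpiece L beta (Datatypes.S n) k).
    set (ks := seq 1 (L + Ss - 1)).
    assert (HI : Iv L Ss beta (Datatypes.S n) =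
                 map (g 0%nat) (A ++ B) ++ flat_map (fun k => map (g k) A) ks).
    { simpl. unfold A, B. rewrite firstn_skipn. reflexivity. }
    assert (HP := perm_key g A B ks).
    rewrite <- HI in HP.
    assert (Hks : (0%nat :: ks) = seq 0 (L + Ss)) by (apply seq0_cons; lia).
    rewrite Hks in HP.
    assert (HAB : I = A ++ B) by (unfold A, B; rewrite firstn_skipn; auto).
    assert (Hfop' := Hfop). rewrite HAB in Hfop'.
    destruct (FOP_app_inv _ _ _ Hfop') as (FA & FB & FAB).
    assert (InA : forall a, In a A -> In a I) by (intros; eapply in_firstn_in; eauto).
    assert (InB : forall a, In a B -> In a I) by (intros; eapply in_skipn_in; eauto).
    assert (SubA : forall a k, In a A -> (k < L + Ss)%nat -> subi (g k a) a).
    { intros a k Ha Hk. rewrite Forall_forall in Hd. specialize (Hd a Ha).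
      destruct (piece_in L Ss beta n k Hb H Hk) as [P1 P2].
      unfold subi, g, gpiece; simpl. lra. }
    assert (SubB : forall b, In b I -> subi (g 0%nat b) b).
    { intros b Hb'. rewrite Forall_forall in Hc. specialize (Hc b Hb').
      unfold subi, g, gpiece; simpl. rewrite shift0 by auto. rewrite lenk_lt by lia.
      replace (Datatypes.S n) with (n + 1)%nat by lia. lra. }
    assert (Hpos : 0 <= beta ^ Datatypes.S n) by (apply pow_le; lra).
    assert (HinP : forall u, In u (Iv L Ss beta (Datatypes.S n)) ->
              exists a k, In a I /\ u = g k a /\ subi u a).
    { intros u Hu. apply (Permutation_in _ HP) in Hu. apply in_app_or in Hu.
      destruct Hu as [Hu|Hu].
      - apply in_flat_map in Hu. destruct Hu as (a & Ha & Hu).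
        apply in_map_iff in Hu. destruct Hu as (k & <- & Hk). apply in_seq in Hk.
        exists a, k. split; [auto|split; auto]. apply SubA; auto; lia.
      - apply in_map_iff in Hu. destruct Hu as (b & <- & Hb').
        exists b, 0%nat. split; auto. }
    unfold Inv. split; [|split; [|split]].
    +
      rewrite HI, length_app, length_map, <- HAB, Hlen, ls_t_S.
      rewrite (length_flat_map_const _ l).
      * unfold ks. rewrite length_seq. fold t l. lia.
      * intros k _. rewrite length_map. unfold A. apply firstn_length_le. lia.
    +
      eapply FOP_perm; [apply disj_sym| apply Permutation_sym; exact HP|].
      apply FOP_app.
      * apply (FOP_flat_map _ disj); auto.
        -- intros a Ha. apply FOP_map_seq. intros i j _ Hij _.
           unfold disj, g, gpiece; simpl. left.
           pose proof (piece_disj L beta n i j Hb Hij). lra.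
        -- intros a b u v Ha Hb' Hab Hu Hv.
           apply in_map_iff in Hu. destruct Hu as (k & <- & Hk). apply in_seq in Hk.
           apply in_map_iff in Hv. destruct Hv as (k' & <- & Hk'). apply in_seq in Hk'.
           eapply disj_sub; [exact Hab| apply SubA | apply SubA]; auto; lia.
      * apply (FOP_map _ disj); auto.
        intros a b Ha Hb' Hab. eapply disj_sub; [exact Hab|apply SubB|apply SubB]; auto.
      * intros u v Hu Hv.
        apply in_flat_map in Hu. destruct Hu as (a & Ha & Hu).
        apply in_map_iff in Hu. destruct Hu as (k & <- & Hk). apply in_seq in Hk.
        apply in_map_iff in Hv. destruct Hv as (b & <- & Hb').
        eapply disj_sub; [apply FAB; eauto| apply SubA | apply SubB]; auto; lia.
    + apply Forall_forall. intros u Hu.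
      destruct (HinP u Hu) as (a & k & Ha & -> & Hs).
      rewrite Forall_forall in Hc. specialize (Hc a Ha).
      unfold subi in Hs. pose proof (lenk_lb L beta (Datatypes.S n) k Hb).
      unfold g, gpiece in *; simpl in *. lra.
    + rewrite HI, ls_l_S. fold l t.
      unfold ks. replace (L + Ss - 1)%nat with ((L - 1) + Ss)%nat by lia.
      rewrite seq_app, flat_map_app.
      set (P := flat_map (fun k => map (g k) A) (seq 1 (L - 1))).
      set (Q := flat_map (fun k => map (g k) A) (seq (1 + (L - 1)) Ss)).
      assert (LP : length P = ((L - 1) * l)%nat).
      { unfold P. rewrite (length_flat_map_const _ l).
        - rewrite length_seq. auto.
        - intros k _. rewrite length_map. unfold A. apply firstn_length_le. lia. }
      replace ((L - 1) * l + t)%nat with (length (map (g 0%nat) (A ++ B)) + (length P + 0))%nat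
        by (rewrite length_map, <- HAB, Hlen, LP; lia).
      rewrite firstn_app_2, firstn_app_2. simpl firstn. rewrite app_nil_r.
      apply Forall_app. split.
      * apply Forall_map, Forall_forall. intros a _. unfold g, gpiece; simpl.
        rewrite lenk_lt by lia. simpl; lra.
      * unfold P. apply Forall_flat_map, Forall_forall. intros k Hk. apply in_seq in Hk.
        apply Forall_map, Forall_forall. intros a _. unfold g, gpiece; simpl.
        rewrite lenk_lt by lia. simpl; lra.
Qed.

Lemma dist_lb d y : 0 < d ->
  (d <= y <= 1 - d) \/ (-1 + d <= y <= - d) -> d <= dist_int y.
Proof.
  intros Hd Hy. unfold dist_int, frac_part, Int_part.
  destruct Hy as [Hy|Hy].
  - assert (E : (1%Z = up y)%Z) by (apply tech_up; simpl; lra).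
    rewrite <- E. simpl. unfold Rmin. destruct (Rle_dec _ _); lra.
  - assert (E : (0%Z = up y)%Z) by (apply tech_up; simpl; lra).
    rewrite <- E. simpl. unfold Rmin. destruct (Rle_dec _ _); lra.
Qed.

Lemma len_Lambda L Ss beta n : (1 <= L)%nat -> (2 <= L + Ss)%nat -> 0 < beta < 1 ->
  INR L * beta + INR Ss * beta ^ 2 = 1 -> length (ls_Lambda L Ss beta n) = ls_t L Ss n.
Proof.
  intros. rewrite <- Iv_Lambda by auto. rewrite length_map.
  destruct (Iv_inv L Ss beta n) as [E _]; auto.
Qed.

Lemma ls_seq_nth L Ss beta n i : (1 <= L)%nat -> (2 <= L + Ss)%nat -> 0 < beta < 1 ->
  INR L * beta + INR Ss * beta ^ 2 = 1 -> (i < ls_t L Ss n)%nat ->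
  ls_seq L Ss beta i = fst (nth i (Iv L Ss beta n) (0, 0)).
Proof.
  intros H1 H2 Hb H Hi. unfold ls_seq.
  replace (nth i (ls_Lambda L Ss beta i) 0) with (nth i (ls_Lambda L Ss beta n) 0).
  - rewrite <- Iv_Lambda by auto. change 0 with (fst ((0, 0) : R * R)) at 1.
    apply map_nth.
  - destruct (Nat.le_gt_cases i n) as [Hin|Hin].
    + destruct (Lambda_prefix L Ss beta i n Hin) as [r Hr]. rewrite Hr.
      apply app_nth1. rewrite len_Lambda by auto.
      destruct (ls_nat L Ss i H1 H2) as (_ & _ & C). lia.
    + destruct (Lambda_prefix L Ss beta n i ltac:(lia)) as [r Hr]. rewrite Hr.
      symmetry. apply app_nth1. rewrite len_Lambda by auto. auto.
Qed.

Lemma pts_far L Ss beta n i j : (1 <= L)%nat -> (2 <= L + Ss)%nat -> 0 < beta < 1 ->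
  INR L * beta + INR Ss * beta ^ 2 = 1 -> (i < ls_t L Ss n)%nat -> (j < ls_t L Ss n)%nat ->
  i <> j -> beta ^ (n + 1) <= dist_int (ls_seq L Ss beta i - ls_seq L Ss beta j).
Proof.
  intros H1 H2 Hb H Hi Hj Hij.
  rewrite (ls_seq_nth L Ss beta n i), (ls_seq_nth L Ss beta n j) by auto.
  destruct (Iv_inv L Ss beta n H1 H2 Hb H) as (Hlen & Hfop & Hc & _).
  set (I := Iv L Ss beta n) in *.
  assert (Hdj : disj (nth i I (0, 0)) (nth j I (0, 0))).
  { destruct (proj1 (Nat.lt_gt_cases i j) Hij) as [Hl|Hl].
    - apply FOP_nth; auto; lia.
    - apply disj_sym. apply FOP_nth; auto; lia. }
  rewrite Forall_forall in Hc.
  assert (Ci : In (nth i I (0,0)) I) by (apply nth_In; lia).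
  assert (Cj : In (nth j I (0,0)) I) by (apply nth_In; lia).
  apply Hc in Ci. apply Hc in Cj.
  apply dist_lb.
  - apply pow_lt; lra.
  - unfold disj in Hdj. destruct Hdj; [right|left]; lra.
Qed.

Theorem corollary1 (L S : nat) (beta : R) :
  (1 <= L)%nat -> (2 <= L + S)%nat ->
  0 < beta < 1 -> INR L * beta + INR S * beta ^ 2 = 1 ->
  ~ poissonian_pair_correlations (ls_seq L S beta).
Proof.
  intros HL HLS Hb H Hpc.
  specialize (Hpc (beta / 2) ltac:(lra) beta ltac:(lra)).
  destruct Hpc as [N0 HN].
  destruct (ls_nat L S N0 HL HLS) as (_ & _ & Ht).
  set (T := ls_t L S N0) in *.
  specialize (HN T ltac:(lia)).
  assert (HT : 0 < INR T) by (apply lt_0_INR; lia).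
  assert (Htb := ls_tb L S beta N0 HL HLS Hb H). fold T in Htb.
  assert (Hs : beta / 2 / INR T < beta ^ (N0 + 1)).
  { apply (Rmult_lt_reg_r (INR T)); auto.
    replace (beta / 2 / INR T * INR T) with (beta / 2) by (field; lra).
    rewrite pow_add. simpl. nra. }
  assert (E : pair_count (ls_seq L S beta) T (beta / 2) = 0%nat).
  { unfold pair_count. rewrite filter_nil; auto.
    intros [i j] Hin. apply in_prod_iff in Hin. destruct Hin as [Hi Hj].
    apply in_seq in Hi. apply in_seq in Hj. simpl fst; simpl snd.
    destruct (Nat.eq_dec i j); auto.
    destruct (Rle_dec _ _) as [Hle|]; auto. exfalso.
    pose proof (pts_far L S beta N0 i j HL HLS Hb H ltac:(lia) ltac:(lia) n). lra. }
  unfold F_pc in HN. rewrite E in HN. unfold R_dist in HN. simpl INR in HN.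
  replace (0 / INR T - 2 * (beta / 2)) with (- beta) in HN by (field; lra).
  rewrite Rabs_Ropp, Rabs_right in HN by lra. lra.
Qed.
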